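(* For any $\epsilon_{\mathrm{sim}}\le1/2$, there exist episodic MDPs $\mathcal{M}^{\mathsf{sim}},\mathcal{M}^{\mathsf{real},1},\mathcal{M}^{\mathsf{real},2}$ (sharing state space, finite action set, rewards, initial state and horizon) and a finite function class $\mathcal{F}$ such that: 1. Each of $\mathcal{M}^{\mathsf{real},1},\mathcal{M}^{\mathsf{real},2}$ satisfies $\|P^{\mathsf{real},i}_h(\cdot\mid s,a)-P^{\mathsf{sim}}_h(\cdot\mid s,a)\|_{\mathrm{TV}}\le\epsilon_{\mathrm{sim}}$ for all $(s,a,h)$; $\mathcal{M}^{\mathsf{sim}}$ and both real MDPs are low-rank MDPs of common dimension $d$; $\mathcal{M}^{\mathsf{sim}}$ satisfies reachability with some $\lambda_{\min}^\star>0$; and $\mathcal{F}$ is Bellman complete with respect to $\mathcal{M}^{\mathsf{sim}}$ and each real MDP. 2. There exists a policy $\pi_{\mathrm{exp}}$ such that $\lambda_{\min}(\mathbb{E}^{\mathcal{M}^{\mathsf{sim}},\pi_{\mathrm{exp}}}[\boldsymbol{\phi}^{\mathsf{s}}(s_h,a_h)\boldsymbol{\phi}^{\mathsf{s}}(s_h,a_h)^\top])=1/2$ for all $h\in[H]$, and for any $T\ge0$, if $\pi_{\mathrm{exp}}$ is played on the real MDP for $T$ steps (episodes), $$\inf_{\widehat{\pi}}\ \sup_{\mathcal{M}\in\{\mathcal{M}^{\mathsf{real},1},\mathcal{M}^{\mathsf{real},2}\}}\mathbb{E}^{\mathcal{M},\pi_{\mathrm{exp}}}\big[V_0^{\mathcal{M},\star}-V_0^{\mathcal{M},\widehat{\pi}}\big]\ge\epsilon_{\mathrm{sim}},$$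 where the infimum is over all rules mapping the collected data to a policy $\widehat{\pi}$.
   Context: Episodic MDP $(\mathcal{S},\mathcal{A},\{P_h\}_{h=1}^H,\{r_h\},s_1,H)$ with finite $\mathcal{A}$ and deterministic rewards in $[0,1]$; $V_0^{\mathcal{M},\pi}$ is the expected total reward of $\pi$ from $s_1$, $V_0^{\mathcal{M},\star}=\sup_\pi V_0^{\mathcal{M},\pi}$; $\mathbb{E}^{\mathcal{M},\pi}$ is expectation when playing $\pi$ on $\mathcal{M}$. Low-rank MDP of dimension $d$: $P_h(\cdot\mid s,a)=\langle\boldsymbol{\phi}(s,a),\boldsymbol{\mu}_h(\cdot)\rangle$ with $\|\boldsymbol{\phi}\|_2\le1$, $\|\int|\mathrm{d}\boldsymbol{\mu}_h|\|_2\le\sqrt d$; $\boldsymbol{\phi}^{\mathsf{s}}$ denotes the features of $\mathcal{M}^{\mathsf{sim}}$. Reachability: $\min_h\sup_\pi\lambda_{\min}(\mathbb{E}^{\mathcal{M}^{\mathsf{sim}},\pi}[\boldsymbol{\phi}^{\mathsf{s}}\boldsymbol{\phi}^{\mathsf{s}\top}])\ge\lambda_{\min}^\star$. $\mathcal{F}=\prod_h\mathcal{F}_h$, $\mathcal{F}_h\subseteq\{\mathcal{S}\times\mathcal{A}\to[0,H]\}$, $f_{H+1}=0$; $\mathcal{T}f_{h+1}(s,a)=r_h(s,a)+\mathbb{E}_{s'\sim P_h(\cdot|s,a)}\max_{a'}f_{h+1}(s',a')$; Bellman complete: $\mathcal{T}f_{h+1}\in\mathcal{F}_h$ for all $f_{h+1}\in\mathcal{F}_{h+1}$.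 *)

(* Defs.v *)
From HB Require Import structures.
From mathcomp Require Import all_boot all_order all_algebra.
From mathcomp Require Import boolp classical_sets reals.
Set Implicit Arguments. Unset Strict Implicit. Unset Printing Implicit Defensive.
Import Order.TTheory GRing.Theory Num.Theory.
Local Open Scope ring_scope.

Section EpisodicMDP.
Variable R : realType.
Variables S A : finType.
Variable H : nat.  (* horizon; steps are indexed h = 0, ..., H-1 *)

(* P h s a s' = P_h(s' | s, a);  r h s a = r_h(s,a);  pi h s a = pi_h(a | s). *)
Definition kernel := nat -> S -> A -> S -> R.
Definition reward := nat -> S -> A -> R.
Definition policy := nat -> S -> A -> R.

Definition is_kernel (P : kernel) : Prop :=
  forall h, (h < H)%N -> forall s a,
    (forall s', 0 <= P h s a s') /\ \sum_(s' : S) P h s a s' = 1.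

Definition is_reward (r : reward) : Prop :=
  forall h, (h < H)%N -> forall s a, 0 <= r h s a <= 1.

Definition is_policy (pi : policy) : Prop :=
  forall h, (h < H)%N -> forall s,
    (forall a, 0 <= pi h s a) /\ \sum_(a : A) pi h s a = 1.

(* A trajectory (s_1, a_1, ..., s_H, a_H, s_{H+1}) (0-based indices). *)
Definition traj := ({ffun 'I_H.+1 -> S} * {ffun 'I_H -> A})%type.
Definition st (tau : traj) (h : 'I_H) : S := tau.1 (widen_ord (leqnSn H) h).
Definition st_next (tau : traj) (h : 'I_H) : S := tau.1 (lift ord0 h).
Definition act (tau : traj) (h : 'I_H) : A := tau.2 h.

Definition traj_prob (s1 : S) (P : kernel) (pi : policy) (tau : traj) : R :=
  (tau.1 ord0 == s1)%:R *
  \prod_(h < H) (pi h (st tau h) (act tau h) *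
                 P h (st tau h) (act tau h) (st_next tau h)).

Definition value (s1 : S) (r : reward) (P : kernel) (pi : policy) : R :=
  \sum_(tau : traj) traj_prob s1 P pi tau * \sum_(h < H) r h (st tau h) (act tau h).

Definition Vstar (s1 : S) (r : reward) (P : kernel) : R :=
  sup [set v | exists pi, is_policy pi /\ v = value s1 r P pi].

Definition tv (p q : S -> R) : R :=
  \big[Num.max/0]_(E : {set S}) `|\sum_(s in E) (p s - q s)|.

Definition low_rank (d : nat) (P : kernel) (phi : S -> A -> 'cV[R]_d)
    (mu : nat -> S -> 'cV[R]_d) : Prop :=
  (forall h, (h < H)%N -> forall s a s',
     P h s a s' = \sum_(i < d) phi s a i 0 * mu h s' i 0) /\
  (forall s a, Num.sqrt (\sum_(i < d) (phi s a i 0) ^+ 2) <= 1) /\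
  (forall h, (h < H)%N ->
     Num.sqrt (\sum_(i < d) (\sum_(s' : S) `|mu h s' i 0|) ^+ 2)
       <= Num.sqrt (d%:R)).

Definition feat_cov (d : nat) (s1 : S) (P : kernel) (pi : policy)
    (phi : S -> A -> 'cV[R]_d) (h : 'I_H) : 'M[R]_d :=
  \sum_(tau : traj) traj_prob s1 P pi tau *:
     (phi (st tau h) (act tau h) *m (phi (st tau h) (act tau h))^T).

Definition is_lambda_min (d : nat) (M : 'M[R]_d) (l : R) : Prop :=
  eigenvalue M l /\ forall m, eigenvalue M m -> l <= m.

Definition reachable (d : nat) (s1 : S) (P : kernel) (phi : S -> A -> 'cV[R]_d)
    (lam : R) : Prop :=
  forall h : 'I_H, exists pi, is_policy pi /\
    exists l, is_lambda_min (feat_cov s1 P pi phi h) l /\ lam <= l.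

Definition maxA (a0 : A) (g : A -> R) : R := \big[Num.max/g a0]_(a : A) g a.

Definition bellman (a0 : A) (r : reward) (P : kernel) (h : nat)
    (f : {ffun S * A -> R}) : {ffun S * A -> R} :=
  [ffun sa => r h sa.1 sa.2 +
     \sum_(s' : S) P h sa.1 sa.2 s' * maxA a0 (fun a' => f (s', a'))].

(* F = prod_h F_h, each F_h finite with values in [0,H]; F_{H+1} = {0} *)
Definition fun_class (F : nat -> seq {ffun S * A -> R}) : Prop :=
  F H = [:: 0] /\
  forall h, (h < H)%N -> forall f, f \in F h -> forall sa, 0 <= f sa <= H%:R.

Definition bellman_complete (a0 : A) (r : reward) (P : kernel)
    (F : nat -> seq {ffun S * A -> R}) : Prop :=
  forall h, (h < H)%N -> forall f, f \in F h.+1 -> bellman a0 r P h f \in F h.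

Definition data (T : nat) := {ffun 'I_T -> traj}.
Definition data_prob (T : nat) (s1 : S) (P : kernel) (pi : policy) (D : data T) : R :=
  \prod_(t < T) traj_prob s1 P pi (D t).

Definition exp_subopt (T : nat) (s1 : S) (r : reward) (P : kernel)
    (pi_exp : policy) (est : data T -> policy) : R :=
  \sum_(D : data T) data_prob s1 P pi_exp D *
     (Vstar s1 r P - value s1 r P (est D)).

End EpisodicMDP.

(* Main.v *)
Require Import Defs.
From HB Require Import structures.
From mathcomp Require Import all_boot all_order all_algebra.
From mathcomp Require Import boolp classical_sets reals.
From mathcomp Require Import ring lra.
Import Order.TTheory GRing.Theory Num.Theory.
Local Open Scope ring_scope.
Set Implicit Arguments. Unset Strict Implicit. Unset Printing Implicit Defensive.

Ltac gen_pi := repeat (match goal with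
  | |- context [?f ?h ?s ?a ?b] =>
     lazymatch type of f with kernel _ _ _ => let w := fresh "w" in set w := f h s a b; clearbody w end
  | |- context [?f ?h ?s ?a] =>
     lazymatch type of f with
     | policy _ _ _ => let w := fresh "w" in set w := f h s a; clearbody w
     | reward _ _ _ => let w := fresh "w" in set w := f h s a; clearbody w end
  end).

Section Gen.
Variable R : realType.

Definition mk3 (T : Type) (x y z : T) : {ffun 'I_3 -> T} :=
  [ffun i : 'I_3 => if (i : nat) == 0%N then x else if (i : nat) == 1%N then y else z].
Definition mk2 (T : Type) (x y : T) : {ffun 'I_2 -> T} :=
  [ffun i : 'I_2 => if (i : nat) == 0%N then x else y].

Lemma sum_ffun3 (T : finType) (F : {ffun 'I_3 -> T} -> R) :
  \sum_(f : {ffun 'I_3 -> T}) F f = \sum_x \sum_y \sum_z F (mk3 x y z).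
Proof.
have -> : \sum_x \sum_y \sum_z F (mk3 x y z) = \sum_(p : T * T * T) F (mk3 p.1.1 p.1.2 p.2).
  by rewrite pair_big /= pair_big.
rewrite (reindex (fun p : T * T * T => mk3 p.1.1 p.1.2 p.2)) //.
exists (fun f : {ffun 'I_3 -> T} => (f ord0, f (inord 1), f (inord 2))) => [[[x y] z] _|f _] /=.
  by rewrite !ffunE /= !inordK.
apply/ffunP => i; rewrite ffunE.
case: i => [[|[|[|]]]] //= Hi; congr (f _); apply: val_inj => //=; by rewrite inordK.
Qed.

Lemma sum_ffun2 (T : finType) (F : {ffun 'I_2 -> T} -> R) :
  \sum_(f : {ffun 'I_2 -> T}) F f = \sum_x \sum_y F (mk2 x y).
Proof.
rewrite pair_big /=.
rewrite (reindex (fun p : T * T => mk2 p.1 p.2)) //.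
exists (fun f : {ffun 'I_2 -> T} => (f ord0, f (inord 1))) => [[x y] _|f _] /=.
  by rewrite !ffunE /= !inordK.
apply/ffunP => i; rewrite ffunE.
case: i => [[|[|]]] //= Hi; congr (f _); apply: val_inj => //=; by rewrite inordK.
Qed.

Variables S A : finType.

Lemma traj_sum (s1 : S) (P : kernel R S A) (pi : policy R S A)
  (G : S -> A -> S -> A -> R) : is_kernel 2 P ->
  \sum_(tau : traj S A 2) traj_prob s1 P pi tau *
     G (st tau ord0) (act tau ord0) (st tau ord_max) (act tau ord_max) =
  \sum_a \sum_y \sum_b pi 0%N s1 a * P 0%N s1 a y * pi 1%N y b * G s1 a y b.
Proof.
move=> HP.
rewrite -(pair_big xpredT xpredT (fun f g => traj_prob s1 P pi (f, g) *
     G (st (f,g) ord0) (act (f,g) ord0) (st (f,g) ord_max) (act (f,g) ord_max))) /=.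
rewrite sum_ffun3.
under [X in X = _]eq_bigr => x _.
  under eq_bigr => y _.
    under eq_bigr => z _.
      rewrite (sum_ffun2 (T:=A)).
      over.
    over.
  over.
rewrite /traj_prob /st /act /st_next /=.
under [X in X = _]eq_bigr do under eq_bigr do under eq_bigr do under eq_bigr do under eq_bigr do
  rewrite big_ord_recr big_ord_recr big_ord0 /= !ffunE /=.
rewrite (bigD1 s1) //= [X in _ + X = _]big1 ?addr0; last first.
  move=> i /negbTE Hi; do 4 (apply: big1 => ? _); by rewrite Hi !mul0r.
under eq_bigr do rewrite exchange_big /=.
under eq_bigr do under eq_bigr do rewrite exchange_big /=.
rewrite exchange_big /=.
apply: eq_bigr => a _; apply: eq_bigr => y _; apply: eq_bigr => b _.
rewrite (eq_bigr (fun z => (pi 0%N s1 a * P 0%N s1 a y * pi 1%N y b * G s1 a y b) * P 1%N y b z)); last by move=> z _; rewrite eqxx /=; ring.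
by rewrite -mulr_sumr (HP 1%N _ y b).2 // mulr1.
Qed.

End Gen.

Section Constr.
Variable R : realType.
Variable eps : R.
Hypothesis e0 : 0 <= eps.
Hypothesis e1 : eps <= 1/2.

Definition AA := (bool * bool)%type.

Definition ptrue (dl : R) (a : AA) : R :=
  if a.1 then (if a.2 then 1/2 - dl else 1/2 + dl) else (if a.2 then 1 else 0).
Definition Pk (dl : R) : kernel R bool AA :=
  fun h s a s' => if s' then ptrue dl a else 1 - ptrue dl a.
Definition rew : reward R bool AA :=
  fun h s a => if h == 0%N then (if a.1 then 1/2 else 0) else (if s then 1 else 0).
Definition pie : policy R bool AA := fun h s a => if a.1 then 0 else 1/2.

Lemma bT : (true%:R : R) = 1. Proof. by []. Qed.
Lemma bF : (false%:R : R) = 0. Proof. by []. Qed.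

Lemma sumA (g : AA -> R) : \sum_a g a = g (true,true) + g (true,false) + (g (false,true) + g (false,false)).
Proof.
rewrite (_ : \sum_a g a = \sum_x \sum_y g (x,y)); first by rewrite !big_bool.
by rewrite pair_big /=; apply: eq_big => // -[].
Qed.

Lemma ptrue_b dl a : -(1/2) <= dl <= 1/2 -> 0 <= ptrue dl a <= 1.
Proof. by move=> /andP[h1 h2]; case: a => [[] []]; rewrite /ptrue /=; apply/andP; split; lra. Qed.

Lemma Pk_kernel dl : -(1/2) <= dl <= 1/2 -> is_kernel 2 (Pk dl).
Proof.
move=> hd h _ s a; have /andP[h1 h2] := ptrue_b a hd; split.
  by case=> /=; lra.
by rewrite big_bool /=; ring.
Qed.

Lemma value_eq dl pi : -(1/2) <= dl <= 1/2 -> is_policy 2 pi ->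
  value 2 false rew (Pk dl) pi = \sum_a pi 0%N false a * (rew 0 false a + ptrue dl a).
Proof.
move=> hd hpi.
rewrite /value (eq_bigr (fun tau => traj_prob false (Pk dl) pi tau *
   (fun x a y b => rew 0 x a + rew 1 y b) (st tau ord0) (act tau ord0) (st tau ord_max) (act tau ord_max))); last first.
  move=> tau _; rewrite big_ord_recr big_ord1 /=; congr (_ * (_ + _)).
  by congr (rew _ (st tau _) (act tau _)); apply: val_inj.
rewrite (traj_sum false pi (fun x a y b => rew 0 x a + rew 1 y b)); last exact: Pk_kernel.
apply: eq_bigr => a _.
rewrite big_bool /=.
rewrite [X in X + _ = _](eq_bigr (fun b => (pi 0%N false a * Pk dl 0%N false a true * (rew 0 false a + 1)) * pi 1%N true b)); last by move=> b _; rewrite {2}/rew /=; gen_pi; (ring || (idtac "FAILED"; match goal with |- ?g => idtac g end; fail)).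
rewrite [X in _ + X = _](eq_bigr (fun b => (pi 0%N false a * Pk dl 0%N false a false * (rew 0 false a + 0)) * pi 1%N false b)); last by move=> b _; rewrite {2}/rew /=; gen_pi; (ring || (idtac "FAILED"; match goal with |- ?g => idtac g end; fail)).
rewrite -!mulr_sumr !(hpi 1%N _ _).2 // /Pk /=; gen_pi; (ring || (idtac "FAILED"; match goal with |- ?g => idtac g end; fail)).
Qed.

Lemma wavg_le (pi : policy R bool AA) (g : AA -> R) c : is_policy 2 pi ->
  (forall a, g a <= c) -> \sum_a pi 0%N false a * g a <= c.
Proof.
move=> hpi hg.
apply: (@le_trans _ _ (\sum_a pi 0%N false a * c)).
  by apply: ler_sum => a _; apply: ler_wpM2l; [exact: ((hpi 0%N isT false).1 a) | exact: hg].
by rewrite -mulr_suml (hpi 0%N isT false).2 mul1r.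
Qed.

Lemma hd_eps : -(1/2) <= eps <= 1/2. Proof. have := e0; have := e1; move=> h1 h2; apply/andP; split; lra. Qed.
Lemma hd_neps : -(1/2) <= - eps <= 1/2. Proof. have := e0; have := e1; move=> h1 h2; apply/andP; split; lra. Qed.
Lemma hd_0 : -(1/2) <= (0:R) <= 1/2. Proof. apply/andP; split; lra. Qed.

Lemma value_le dl pi : -(1/2) <= dl <= 1/2 -> is_policy 2 pi ->
  value 2 false rew (Pk dl) pi <= 2.
Proof.
move=> hd hpi; rewrite value_eq //; apply: wavg_le => // a.
have /andP[h1 h2] := ptrue_b a hd.
rewrite /rew /=; case: (a.1) => /=; lra.
Qed.

Lemma Vstar_ge dl pi : -(1/2) <= dl <= 1/2 -> is_policy 2 pi ->
  value 2 false rew (Pk dl) pi <= Vstar 2 false rew (Pk dl).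
Proof.
move=> hd hpi; apply: ub_le_sup; last by exists pi.
by exists 2 => v [p [hp ->]]; apply: value_le.
Qed.

Definition pstar (b : bool) : policy R bool AA :=
  fun h s a => if a.1 && (a.2 == b) then 1 else 0.

Lemma pstar_pol b : is_policy 2 (pstar b).
Proof.
move=> h _ s; split.
  by move=> a; rewrite /pstar; case: ifP => _; lra.
by rewrite sumA /pstar /=; case: b => /=; ring.
Qed.

Lemma Vstar1 : 1 + eps <= Vstar 2 false rew (Pk eps).
Proof.
have := Vstar_ge hd_eps (pstar_pol false).
rewrite value_eq //; [|exact: hd_eps|exact: pstar_pol].
rewrite sumA /pstar /rew /ptrue /=.
move=> h; have := e0; lra.
Qed.

Lemma Vstar2 : 1 + eps <= Vstar 2 false rew (Pk (- eps)).
Proof.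
have := Vstar_ge hd_neps (pstar_pol true).
rewrite value_eq //; [|exact: hd_neps|exact: pstar_pol].
rewrite sumA /pstar /rew /ptrue /=.
move=> h; have := e0; lra.
Qed.

Lemma gap_sum pi : is_policy 2 pi ->
  2 * eps <= (Vstar 2 false rew (Pk eps) - value 2 false rew (Pk eps) pi) +
             (Vstar 2 false rew (Pk (- eps)) - value 2 false rew (Pk (- eps)) pi).
Proof.
move=> hpi.
have h1 := Vstar1; have h2 := Vstar2.
have : value 2 false rew (Pk eps) pi + value 2 false rew (Pk (- eps)) pi <= 2.
  rewrite !value_eq //; try exact: hd_eps; try exact: hd_neps.
  rewrite -big_split /=.
  apply: (@le_trans _ _ (\sum_a pi 0%N false a * 2)).
    apply: ler_sum => a _; rewrite -mulrDr; apply: ler_wpM2l; first exact: ((hpi 0%N isT false).1 a).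
    rewrite /rew /ptrue /=; case: a => [[] []] /=; lra.
  by rewrite -mulr_suml (hpi 0%N isT false).2 mul1r.
move=> h3; have := e0; lra.
Qed.


Lemma traj_ge0 dl (pi : policy R bool AA) (tau : traj bool AA 2) : -(1/2) <= dl <= 1/2 ->
  (forall h s a, 0 <= pi h s a) -> 0 <= traj_prob false (Pk dl) pi tau.
Proof.
move=> hd hp; rewrite /traj_prob; apply: mulr_ge0; first by case: (_ == _).
apply: prodr_ge0 => h _; apply: mulr_ge0 => //.
have /andP[h1 h2] := ptrue_b (act tau h) hd.
by rewrite /Pk; case: (st_next tau h); lra.
Qed.

Lemma pie_ge0 h s a : 0 <= pie h s a.
Proof. by rewrite /pie; case: ifP => _; lra. Qed.

Lemma pie_pol : is_policy 2 pie.
Proof. move=> h _ s; split; first exact: pie_ge0. by rewrite sumA /pie /=; field. Qed.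

Lemma traj_eq (tau : traj bool AA 2) : traj_prob false (Pk eps) pie tau = traj_prob false (Pk (- eps)) pie tau.
Proof.
rewrite /traj_prob; congr (_ * _); apply: eq_bigr => h _.
rewrite /pie /Pk /ptrue; case: (act tau h) => [[] []] /=; by rewrite ?mul0r.
Qed.

Lemma traj_sum_one dl : -(1/2) <= dl <= 1/2 ->
  \sum_(tau : traj bool AA 2) traj_prob false (Pk dl) pie tau = 1.
Proof.
move=> hd.
rewrite (eq_bigr (fun tau => traj_prob false (Pk dl) pie tau *
   (fun x a y b => (1:R)) (st tau ord0) (act tau ord0) (st tau ord_max) (act tau ord_max))); last by move=> tau _; rewrite mulr1.
rewrite (traj_sum false pie (fun x a y b => (1:R))); last exact: Pk_kernel.
by rewrite sumA !big_bool /= !sumA /pie /Pk /ptrue /=; field.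
Qed.

Lemma data_sum_one dl T : -(1/2) <= dl <= 1/2 ->
  \sum_(D : data bool AA 2 T) data_prob false (Pk dl) pie D = 1.
Proof.
move=> hd; rewrite /data_prob.
rewrite -(bigA_distr_bigA (fun (t : 'I_T) (tau : traj bool AA 2) => traj_prob false (Pk dl) pie tau)) /=.
by rewrite big1 // => t _; rewrite traj_sum_one.
Qed.

Lemma final T (est : data bool AA 2 T -> policy R bool AA) :
  (forall D, is_policy 2 (est D)) ->
  eps <= Num.max (exp_subopt false rew (Pk eps) pie est) (exp_subopt false rew (Pk (- eps)) pie est).
Proof.
move=> hest.
have hs : 2 * eps <= exp_subopt false rew (Pk eps) pie est + exp_subopt false rew (Pk (- eps)) pie est.
  rewrite /exp_subopt -big_split /=.
  apply: (@le_trans _ _ (\sum_(D : data bool AA 2 T) data_prob false (Pk eps) pie D * (2 * eps))).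
    rewrite -mulr_suml data_sum_one; [by rewrite mul1r | exact: hd_eps].
  apply: ler_sum => D _.
  have -> : data_prob false (Pk (- eps)) pie D = data_prob false (Pk eps) pie D.
    by rewrite /data_prob; apply: eq_bigr => t _; rewrite traj_eq.
  rewrite -mulrDr; apply: ler_wpM2l; last exact: gap_sum.
  by apply: prodr_ge0 => t _; apply: traj_ge0; [exact: hd_eps | exact: pie_ge0].
have h1 : exp_subopt false rew (Pk eps) pie est <= Num.max (exp_subopt false rew (Pk eps) pie est) (exp_subopt false rew (Pk (- eps)) pie est).
  by rewrite le_max lexx.
have h2 : exp_subopt false rew (Pk (- eps)) pie est <= Num.max (exp_subopt false rew (Pk eps) pie est) (exp_subopt false rew (Pk (- eps)) pie est).
  by rewrite le_max lexx orbT.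
lra.
Qed.


Definition phiK (dl : R) (s : bool) (a : AA) : 'cV[R]_2 :=
  \col_(i < 2) (if (i : nat) == 1%N then ptrue dl a else 1 - ptrue dl a).
Definition muK (h : nat) (s' : bool) : 'cV[R]_2 :=
  \col_(i < 2) (if (i : nat) == (if s' then 1 else 0)%N then 1 else 0).

Lemma feat_cov_half (h : 'I_2) : feat_cov false (Pk 0) pie (phiK 0) h = (1/2)%:M.
Proof.
apply/matrixP => i j.
rewrite /feat_cov summxE.
under eq_bigr do rewrite !mxE big_ord1 !mxE.
have [->|->] : h = ord0 \/ h = ord_max.
  by case: h => [[|[|]]] //= Hh; [left|right]; apply: val_inj.
- rewrite (traj_sum false pie (fun x a y b => (if (i : nat) == 1%N then ptrue 0 a else 1 - ptrue 0 a) * (if (j : nat) == 1%N then ptrue 0 a else 1 - ptrue 0 a))); last exact: (Pk_kernel hd_0).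
  rewrite !mxE sumA !big_bool /= !sumA /pie /Pk /ptrue /=.
  by case: i => [[|[|]]] //= Hi; case: j => [[|[|]]] //= Hj; field.
- rewrite (traj_sum false pie (fun x a y b => (if (i : nat) == 1%N then ptrue 0 b else 1 - ptrue 0 b) * (if (j : nat) == 1%N then ptrue 0 b else 1 - ptrue 0 b))); last exact: (Pk_kernel hd_0).
  rewrite !mxE sumA !big_bool /= !sumA /pie /Pk /ptrue /=.
  by case: i => [[|[|]]] //= Hi; case: j => [[|[|]]] //= Hj; field.
Qed.


Lemma lmin_scalar (n : nat) (c : R) : is_lambda_min (c%:M : 'M[R]_n.+1) c.
Proof.
split.
  apply/eigenvalueP; exists (const_mx 1 : 'rV[R]_n.+1); first by rewrite mul_mx_scalar.
  apply/eqP => /matrixP /(_ 0 0); rewrite !mxE => /eqP; by rewrite oner_eq0.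
move=> m /eigenvalueP [v hv hv0].
rewrite mul_mx_scalar in hv.
have : (c - m) *: v = 0 by rewrite scalerBl hv subrr.
move/eqP; rewrite scaler_eq0 (negbTE hv0) orbF subr_eq0 => /eqP ->; exact: lexx.
Qed.

Lemma tv_le dl h s a : `|dl| <= eps -> tv (Pk dl h s a) (Pk 0 h s a) <= eps.
Proof.
move=> hdl; rewrite /tv.
apply: (big_ind (fun x => x <= eps)); first by have := e0.
  by move=> x y hx hy; rewrite ge_max hx hy.
move=> E _; rewrite big_mkcond big_bool /=.
have hd : `|ptrue dl a - ptrue 0 a| <= eps.
  move: hdl; rewrite !ler_norml => /andP[h1 h2]; have := e0.
  by rewrite /ptrue; case: a => [[] []] /= => h3; apply/andP; split; lra.
case: (true \in E); case: (false \in E); rewrite /Pk.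
- have -> : ptrue dl a - ptrue 0 a + (1 - ptrue dl a - (1 - ptrue 0 a)) = 0 by ring.
  by rewrite normr0; have := e0.
- by rewrite addr0.
- have -> : 0 + (1 - ptrue dl a - (1 - ptrue 0 a)) = - (ptrue dl a - ptrue 0 a) by ring.
  by rewrite normrN.
- by rewrite addr0 normr0; have := e0.
Qed.


Lemma lowrank_Pk dl : -(1/2) <= dl <= 1/2 -> low_rank 2 (Pk dl) (phiK dl) muK.
Proof.
move=> hd.
split; [|split].
- move=> h _ s a s'; rewrite !big_ord_recr big_ord0 /= !mxE /Pk /=.
  by case: s'; rewrite /=; ring.
- move=> s a; rewrite -sqrtr1 ler_sqrt ?ler01 //.
  rewrite !big_ord_recr big_ord0 /= !mxE /=.
  have /andP[g1 g2] := ptrue_b a hd.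
  have hp : 0 <= ptrue dl a * (1 - ptrue dl a) by apply: mulr_ge0; lra.
  move: g1 g2 hp; set p := ptrue dl a => g1 g2 hp; rewrite add0r; nra.
- move=> h _; rewrite ler_sqrt ?ler0n //.
  rewrite !big_ord_recr big_ord0 /= !big_bool /= !mxE /=.
  by rewrite normr0 normr1; lra.
Qed.


Definition a00 : AA := (false, false).
Definition f1 : {ffun bool * AA -> R} := [ffun sa => if sa.1 then 1 else 0].
Definition Fc (n : nat) : seq {ffun bool * AA -> R} :=
  match n with
  | 0 => [:: bellman a00 rew (Pk 0) 0 f1; bellman a00 rew (Pk eps) 0 f1; bellman a00 rew (Pk (- eps)) 0 f1]
  | 1 => [:: f1]
  | _ => [:: 0]
  end.

Lemma maxA_const (g : AA -> R) c : (forall a, g a = c) -> Defs.maxA a00 g = c.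
Proof.
move=> hg; rewrite /Defs.maxA; apply: (big_ind (fun x => x = c)) => //.
by move=> x y -> ->; exact: maxxx.
Qed.

Lemma bellman1 P : bellman a00 rew P 1 0 = f1.
Proof.
apply/ffunP => sa; rewrite !ffunE big1 ?addr0 //.
move=> s' _; rewrite (@maxA_const _ 0) ?mulr0 // => a; by rewrite ffunE.
Qed.

Lemma bellman0_val dl sa : bellman a00 rew (Pk dl) 0 f1 sa = rew 0 sa.1 sa.2 + ptrue dl sa.2.
Proof.
rewrite ffunE big_bool (@maxA_const _ 1); last by move=> a; rewrite ffunE.
rewrite (@maxA_const _ 0); last by move=> a; rewrite ffunE.
by rewrite /Pk mulr1 mulr0 /= addr0.
Qed.

Lemma Fc_class : fun_class 2 Fc.
Proof.
split => // h; case: h => [|[|//]] _ f.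
- rewrite !inE => /or3P [] /eqP -> sa; rewrite bellman0_val;
  [have := ptrue_b sa.2 hd_0 | have := ptrue_b sa.2 hd_eps | have := ptrue_b sa.2 hd_neps];
  move=> /andP[g1 g2]; rewrite /rew /=; case: ifP => _; apply/andP; split; lra.
- rewrite !inE => /eqP -> sa; rewrite ffunE; case: ifP => _; apply/andP; split; lra.
Qed.

Lemma Fc_bc dl : bellman a00 rew (Pk dl) 0 f1 \in Fc 0 -> bellman_complete 2 a00 rew (Pk dl) Fc.
Proof.
move=> hin h; case: h => [|[|//]] _ f.
- by rewrite /= inE => /eqP ->.
- by rewrite /= inE => /eqP ->; rewrite bellman1 inE.
Qed.


Lemma rew_ok : is_reward 2 rew.
Proof.
move=> h hh s a; rewrite /rew.
case: h hh => [|[|//]] _ /=; [case: (a.1) | case: s]; apply/andP; split; lra.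
Qed.

End Constr.

Unset Implicit Arguments.
Set Strict Implicit.

Theorem proposition5 (R : realType) (eps_sim : R) :
  0 <= eps_sim -> eps_sim <= 1 / 2 ->
  exists (S A : finType) (a0 : A) (s1 : S) (H : nat) (r : reward R S A)
         (Psim P1 P2 : kernel R S A) (F : nat -> seq {ffun S * A -> R}) (d : nat),
    (* well-formed episodic MDPs sharing S, A, r, s1, H *)
    is_reward H r /\ is_kernel H Psim /\ is_kernel H P1 /\ is_kernel H P2 /\
    (* 1. closeness in TV *)
    (forall h, (h < H)%N -> forall s a,
        tv (P1 h s a) (Psim h s a) <= eps_sim /\
        tv (P2 h s a) (Psim h s a) <= eps_sim) /\
    (* real MDPs are low-rank of dimension d *)
    (exists phi mu, low_rank H (d:=d) P1 phi mu) /\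
    (exists phi mu, low_rank H (d:=d) P2 phi mu) /\
    (* finite class F, Bellman complete w.r.t. sim and both real MDPs *)
    fun_class H F /\
    bellman_complete H a0 r Psim F /\ bellman_complete H a0 r P1 F /\
    bellman_complete H a0 r P2 F /\
    (* sim is low-rank with features phis, satisfies reachability, and 2. *)
    (exists (phis : S -> A -> 'cV[R]_d) (mus : nat -> S -> 'cV[R]_d),
       low_rank H (d:=d) Psim phis mus /\
       (exists lam, 0 < lam /\ reachable H s1 Psim phis lam) /\
       exists pi_exp : policy R S A,
         is_policy H pi_exp /\
         (forall h : 'I_H, is_lambda_min (feat_cov s1 Psim pi_exp phis h) (1 / 2)) /\
         forall (T : nat) (est : data S A H T -> policy R S A),
           (forall D, is_policy H (est D)) ->
           eps_sim <= Num.max (exp_subopt s1 r P1 pi_exp est)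
                              (exp_subopt s1 r P2 pi_exp est)).
Proof.
move=> e0 e1.
have hd0 := @hd_0 R.
have hde := @hd_eps R eps_sim e0 e1.
have hdn := @hd_neps R eps_sim e0 e1.
exists bool, (AA : finType), (a00 : AA), false, 2%N, (@rew R),
  (@Pk R 0), (@Pk R eps_sim), (@Pk R (- eps_sim)), (@Fc R eps_sim), 2%N.
split; first exact: rew_ok.
split; first exact: Pk_kernel.
split; first exact: Pk_kernel.
split; first exact: Pk_kernel.
split.
  move=> h _ s a; split; apply: tv_le => //; by rewrite ?normrN ger0_norm.
split; first by exists (phiK eps_sim), (@muK R); exact: lowrank_Pk.
split; first by exists (phiK (- eps_sim)), (@muK R); exact: lowrank_Pk.
split; first exact: Fc_class.
split; first by apply: Fc_bc; rewrite /= !inE eqxx.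
split; first by apply: Fc_bc; rewrite /= !inE eqxx ?orbT.
split; first by apply: Fc_bc; rewrite /= !inE eqxx ?orbT.
exists (phiK 0), (@muK R); split; first exact: lowrank_Pk.
split.
  exists (1/2); split; first lra.
  move=> h; exists (@pie R); split; first exact: pie_pol.
  exists (1/2); split; last exact: lexx.
  rewrite feat_cov_half; exact: lmin_scalar.
exists (@pie R); split; first exact: pie_pol.
split; first by move=> h; rewrite feat_cov_half; exact: lmin_scalar.
move=> T est hest; exact: final.
Qed.
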